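(* Let $n\ge1$, let $\mathbf u(z),\mathbf v(z)\in\mathbb R^n$ be column vector functions, and let $A$ be a constant real skew-symmetric $n\times n$ matrix. Define the block matrices of block size $(1,n,1)\times(1,n,1)$ \[ {\cal B}_0=\begin{pmatrix} -1 & 0 & 0\\ 0 & 0 & 0\\ 0 & 0 & 1 \end{pmatrix},\quad {\cal B}_1=\begin{pmatrix} 0 & -\mathbf v^T & 0\\ \mathbf u & 0 & -\mathbf v\\ 0 & \mathbf u^T & 0 \end{pmatrix},\quad {\cal B}_2=\begin{pmatrix} -(\mathbf u,\mathbf v) & (\mathbf v')^T & 0\\ \mathbf u' & \mathbf u\mathbf v^T-\mathbf v\mathbf u^T+A & \mathbf v'\\ 0 & (\mathbf u')^T & (\mathbf u,\mathbf v) \end{pmatrix}, \] and ${\cal B}=\zeta{\cal B}_0+{\cal B}_1$. Then: (a) The system \[ \mathbf u''+2(\mathbf u,\mathbf v)\mathbf u-(\mathbf u,\mathbf u)\mathbf v+\tfrac12 z\mathbf u+A\mathbf u=0,\qquad \mathbf v''+2(\mathbf u,\mathbf v)\mathbf v-(\mathbf v,\mathbf v)\mathbf u+\tfrac12 z\mathbf v-A\mathbf v=0 \] admits the isomonodromic Lax representation ${\cal A}'={\cal B}_\zeta+[{\cal B},{\cal A}]$ with ${\cal A}=(2\zeta^2+z){\cal B}_0+2\zeta{\cal B}_1+2{\cal B}_2$. (b) The system \[ \mathbf u''+2(\mathbf u,\mathbf v)\mathbf u-(\mathbf u,\mathbf u)\mathbf v+\tfrac12 (z\mathbf u)'+A\mathbf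 u=0,\qquad \mathbf v''+2(\mathbf u,\mathbf v)\mathbf v-(\mathbf v,\mathbf v)\mathbf u-\tfrac12 (z\mathbf v)'-A\mathbf v=0 \] admits the isomonodromic Lax representation ${\cal A}'={\cal B}_\zeta+[{\cal B},{\cal A}]$ with ${\cal A}=(2+z\zeta^{-1})(\zeta{\cal B}_0+{\cal B}_1)+2\zeta^{-1}{\cal B}_2$.
   Context: Primes denote derivatives with respect to $z$; $\zeta$ is a spectral parameter independent of $z$; $(\cdot,\cdot)$ is the standard scalar product on $\mathbb R^n$. ''Admits the Lax representation'' means the matrix equation holds identically in $\zeta$ by virtue of the system. *)

(* Defs.v *)
From HB Require Import structures.
From mathcomp Require Import all_boot all_order all_algebra.
From mathcomp Require Import all_classical all_reals all_analysis.
Set Implicit Arguments. Unset Strict Implicit. Unset Printing Implicit Defensive.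
Import Order.TTheory GRing.Theory Num.Theory.
Import numFieldNormedType.Exports.
Local Open Scope ring_scope.

Definition dotv (R : realType) (n : nat) (u v : 'cV[R]_n) : R :=
  \sum_(i < n) u i 0 * v i 0.

Definition blk3 (R : realType) (n : nat)
  (a11 : 'M[R]_1) (a12 : 'M[R]_(1, n)) (a13 : 'M[R]_1)
  (a21 : 'M[R]_(n, 1)) (a22 : 'M[R]_n) (a23 : 'M[R]_(n, 1))
  (a31 : 'M[R]_1) (a32 : 'M[R]_(1, n)) (a33 : 'M[R]_1) : 'M[R]_(1 + n + 1) :=
  block_mx (block_mx a11 a12 a21 a22) (col_mx a13 a23)
           (row_mx a31 a32) a33.

Definition calB0 (R : realType) (n : nat) : 'M[R]_(1 + n + 1) :=
  blk3 (-1) 0 0  0 0 0  0 0 1.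

Definition calB1 (R : realType) (n : nat) (u v : 'cV[R]_n) : 'M[R]_(1 + n + 1) :=
  blk3 0 (- v^T) 0  u 0 (- v)  0 u^T 0.

Definition calB2 (R : realType) (n : nat) (A : 'M[R]_n) (u v du dv : 'cV[R]_n)
  : 'M[R]_(1 + n + 1) :=
  blk3 (- (dotv u v)%:M) dv^T 0
       du (u *m v^T - v *m u^T + A) dv
       0 du^T (dotv u v)%:M.

Definition commmx (R : realType) (m : nat) (X Y : 'M[R]_m) : 'M[R]_m :=
  X *m Y - Y *m X.

(* Main.v *)
Require Import Defs.
From HB Require Import structures.
From mathcomp Require Import all_boot all_order all_algebra.
From mathcomp Require Import all_classical all_reals all_analysis.
From mathcomp Require Import ring.
Import Order.TTheory GRing.Theory Num.Theory.
Import numFieldNormedType.Exports.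
Local Open Scope ring_scope.

Section MxDer.
Variable R : realType.
Set Implicit Arguments. Unset Strict Implicit.

Definition mxder {m n} (f : R -> 'M[R]_(m,n)) (z : R) (F : 'M[R]_(m,n)) :=
  forall i j, is_derive z 1 (fun t => f t i j) (F i j).

Lemma mxder_derive1 m n (f : R -> 'M[R]_(m,n)) z F : mxder f z F -> derive1 f z = F.
Proof.
move=> HF.
have Hd : derivable f z 1.
  by apply/derivable_mxP => i j; exact: (@ex_derive _ _ _ _ _ _ _ (HF i j)).
rewrite derive1E derive_mx //; apply/matrixP => i j; rewrite mxE.
exact: (@derive_val _ _ _ _ _ _ _ (HF i j)).
Qed.

Lemma mxder_of m n (f : R -> 'M[R]_(m,n)) z : derivable f z 1 -> mxder f z (derive1 f z).
Proof.
move=> Hd i j; rewrite derive1E derive_mx // mxE.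
apply: derivableP; exact: ((derivable_mxP _ _ _).1 Hd i j).
Qed.

Lemma rder_cst (z a : R) : is_derive z 1 (fun _ : R => a) 0.
Proof. exact: is_derive_cst. Qed.

Lemma rder_add (f g : R -> R) (z a b : R) : is_derive z 1 f a -> is_derive z 1 g b ->
  is_derive z 1 (fun t => f t + g t) (a + b).
Proof. move=> ha hb; exact: is_deriveD. Qed.

Lemma rder_mul (f g : R -> R) (z a b : R) : is_derive z 1 f a -> is_derive z 1 g b ->
  is_derive z 1 (fun t => f t * g t) (a * g z + f z * b).
Proof.
move=> ha hb; have h := is_deriveM ha hb.
apply: (is_derive_eq h). rewrite /GRing.scale /=. ring.
Qed.

Lemma rder_id (z : R) : is_derive z 1 (fun t : R => t) 1.
Proof. exact: is_derive_id. Qed.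

Lemma rder_opp (f : R -> R) (z a : R) : is_derive z 1 f a -> is_derive z 1 (fun t => - f t) (- a).
Proof. move=> ha; exact: is_deriveN. Qed.

Lemma rder_sum k (f : 'I_k -> R -> R) (z : R) (a : 'I_k -> R) :
  (forall i, is_derive z 1 (f i) (a i)) ->
  is_derive z 1 (fun t => \sum_(i < k) f i t) (\sum_(i < k) a i).
Proof.
move=> h; have -> : (fun t => \sum_(i < k) f i t) = \sum_(i < k) f i.
  by apply/funext => t; rewrite fct_sumE.
exact: is_derive_sum.
Qed.

Lemma rder_eq (f : R -> R) (z a b : R) : is_derive z 1 f a -> a = b -> is_derive z 1 f b.
Proof. by move=> h <-. Qed.

Lemma rder_ext (f g : R -> R) (z a : R) : is_derive z 1 f a -> f = g -> is_derive z 1 g a.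
Proof. by move=> h <-. Qed.

Lemma mxder_cst m n (C : 'M[R]_(m,n)) z : mxder (fun _ => C) z 0.
Proof. by move=> i j; rewrite mxE; exact: rder_cst. Qed.

Lemma mxder_add m n (f g : R -> 'M[R]_(m,n)) z F G :
  mxder f z F -> mxder g z G -> mxder (fun t => f t + g t) z (F + G).
Proof.
move=> hf hg i j; rewrite mxE.
apply: (rder_ext (rder_add (hf i j) (hg i j))).
by apply/funext => t; rewrite mxE.
Qed.

Lemma mxder_opp m n (f : R -> 'M[R]_(m,n)) z F :
  mxder f z F -> mxder (fun t => - f t) z (- F).
Proof.
move=> hf i j; rewrite mxE.
apply: (rder_ext (rder_opp (hf i j))).
by apply/funext => t; rewrite mxE.
Qed.

Lemma mxder_scalef m n (c : R -> R) (f : R -> 'M[R]_(m,n)) (z dc : R) F :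
  is_derive z 1 c dc -> mxder f z F -> mxder (fun t => c t *: f t) z (dc *: f z + c z *: F).
Proof.
move=> hc hf i j; rewrite !mxE.
apply: (rder_ext (rder_mul hc (hf i j))).
by apply/funext => t; rewrite mxE.
Qed.

Lemma mxder_scale m n (k : R) (f : R -> 'M[R]_(m,n)) z F :
  mxder f z F -> mxder (fun t => k *: f t) z (k *: F).
Proof.
move=> hf i j; have := mxder_scalef (rder_cst z k) hf i j.
by rewrite !mxE mul0r add0r.
Qed.

Lemma mxder_mul m p q (f : R -> 'M[R]_(m,p)) (g : R -> 'M[R]_(p,q)) z F G :
  mxder f z F -> mxder g z G -> mxder (fun t => f t *m g t) z (F *m g z + f z *m G).
Proof.
move=> hf hg i j.
have h := rder_sum (fun k => rder_mul (hf i k) (hg k j)).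
apply: (rder_ext (rder_eq h _)).
  by rewrite !mxE -big_split /=.
by apply/funext => t; rewrite mxE.
Qed.

Lemma mxder_tr m n (f : R -> 'M[R]_(m,n)) z F :
  mxder f z F -> mxder (fun t => (f t)^T) z F^T.
Proof.
move=> hf i j; rewrite mxE.
apply: (rder_ext (hf j i)).
by apply/funext => t; rewrite mxE.
Qed.

Lemma mxder_row m n1 n2 (f : R -> 'M[R]_(m,n1)) (g : R -> 'M[R]_(m,n2)) z F G :
  mxder f z F -> mxder g z G -> mxder (fun t => row_mx (f t) (g t)) z (row_mx F G).
Proof.
move=> hf hg i j.
have E : forall (A : 'M[R]_(m,n1)) (B : 'M[R]_(m,n2)),
  row_mx A B i j = match fintype.split j with inl k => A i k | inr k => B i k end.
  by move=> A B; rewrite mxE.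
rewrite E; under eq_fun do rewrite E.
by case: (fintype.split j) => k.
Qed.

Lemma mxder_col m1 m2 n (f : R -> 'M[R]_(m1,n)) (g : R -> 'M[R]_(m2,n)) z F G :
  mxder f z F -> mxder g z G -> mxder (fun t => col_mx (f t) (g t)) z (col_mx F G).
Proof.
move=> hf hg i j.
have E : forall (A : 'M[R]_(m1,n)) (B : 'M[R]_(m2,n)),
  col_mx A B i j = match fintype.split i with inl k => A k j | inr k => B k j end.
  by move=> A B; rewrite mxE.
rewrite E; under eq_fun do rewrite E.
by case: (fintype.split i) => k.
Qed.

Lemma mxder_scalar n (c : R -> R) (z dc : R) :
  is_derive z 1 c dc -> mxder (fun t => (c t)%:M : 'M[R]_n) z dc%:M.
Proof.
move=> hc i j; rewrite mxE; under eq_fun do rewrite mxE.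
case: (i == j); rewrite ?mulr1n ?mulr0n //; exact: rder_cst.
Qed.

Lemma mxder_blk3 n (f11 f13 f31 f33 : R -> 'M[R]_1) (f12 : R -> 'M[R]_(1,n))
  (f21 f23 : R -> 'M[R]_(n,1)) (f22 : R -> 'M[R]_n) (f32 : R -> 'M[R]_(1,n)) z
  F11 F12 F13 F21 F22 F23 F31 F32 F33 :
  mxder f11 z F11 -> mxder f12 z F12 -> mxder f13 z F13 ->
  mxder f21 z F21 -> mxder f22 z F22 -> mxder f23 z F23 ->
  mxder f31 z F31 -> mxder f32 z F32 -> mxder f33 z F33 ->
  mxder (fun t => blk3 (f11 t) (f12 t) (f13 t) (f21 t) (f22 t) (f23 t)
     (f31 t) (f32 t) (f33 t)) z (blk3 F11 F12 F13 F21 F22 F23 F31 F32 F33).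
Proof.
move=> *; rewrite /blk3 /block_mx.
by do ?[apply: mxder_col | apply: mxder_row].
Qed.

Lemma dotv_trE n (x y : 'cV[R]_n) : dotv x y = (x^T *m y) ord0 ord0.
Proof. by rewrite mxE /dotv; apply: eq_bigr => k _; rewrite mxE. Qed.

Lemma rder_dotv n (f g : R -> 'cV[R]_n) z F G :
  mxder f z F -> mxder g z G ->
  is_derive z 1 (fun t => dotv (f t) (g t)) (dotv F (g z) + dotv (f z) G).
Proof.
move=> hf hg; have h := mxder_mul (mxder_tr hf) hg ord0 ord0.
apply: (rder_ext (rder_eq h _)).
  by rewrite !dotv_trE mxE.
by apply/funext => t; rewrite dotv_trE.
Qed.


Lemma mxder_calB1 n (u v : R -> 'cV[R]_n) z U V :
  mxder u z U -> mxder v z V -> mxder (fun t => calB1 (u t) (v t)) z (calB1 U V).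
Proof.
move=> hu hv; rewrite /calB1.
apply: mxder_blk3; do ?[exact: mxder_cst | apply: mxder_opp | apply: mxder_tr]; done.
Qed.

Lemma mxder_calB2 n (A : 'M[R]_n) (u v du dv : R -> 'cV[R]_n) z U V DU DV :
  mxder u z U -> mxder v z V -> mxder du z DU -> mxder dv z DV ->
  mxder (fun t => calB2 A (u t) (v t) (du t) (dv t)) z
    (blk3 (- (dotv U (v z) + dotv (u z) V)%:M) DV^T 0
       DU (U *m (v z)^T + u z *m V^T + - (V *m (u z)^T + v z *m U^T) + 0) DV
       0 DU^T (dotv U (v z) + dotv (u z) V)%:M).
Proof.
move=> hu hv hdu hdv; rewrite /calB2.
apply: mxder_blk3.
- exact/mxder_opp/mxder_scalar/rder_dotv.
- exact: mxder_tr.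
- exact: mxder_cst.
- exact: hdu.
- apply: mxder_add; last exact: mxder_cst.
  apply: mxder_add; first exact: mxder_mul (mxder_tr _).
  exact/mxder_opp/mxder_mul/mxder_tr.
- exact: hdv.
- exact: mxder_cst.
- exact: mxder_tr.
- exact/mxder_scalar/rder_dotv.
Qed.

Lemma add_blk3 n (a11 a13 a31 a33 b11 b13 b31 b33 : 'M[R]_1) (a12 a32 b12 b32 : 'M[R]_(1,n))
  (a21 a23 b21 b23 : 'M[R]_(n,1)) (a22 b22 : 'M[R]_n) :
  blk3 a11 a12 a13 a21 a22 a23 a31 a32 a33 + blk3 b11 b12 b13 b21 b22 b23 b31 b32 b33 =
  blk3 (a11 + b11) (a12 + b12) (a13 + b13) (a21 + b21) (a22 + b22) (a23 + b23)
    (a31 + b31) (a32 + b32) (a33 + b33).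
Proof. by rewrite /blk3 !add_block_mx add_col_mx add_row_mx. Qed.

Lemma scale_blk3 n k (a11 a13 a31 a33 : 'M[R]_1) (a12 a32 : 'M[R]_(1,n))
  (a21 a23 : 'M[R]_(n,1)) (a22 : 'M[R]_n) :
  k *: blk3 a11 a12 a13 a21 a22 a23 a31 a32 a33 =
  blk3 (k *: a11) (k *: a12) (k *: a13) (k *: a21) (k *: a22) (k *: a23)
    (k *: a31) (k *: a32) (k *: a33).
Proof. by rewrite /blk3 !scale_block_mx scale_col_mx scale_row_mx. Qed.

Lemma opp_blk3 n (a11 a13 a31 a33 : 'M[R]_1) (a12 a32 : 'M[R]_(1,n))
  (a21 a23 : 'M[R]_(n,1)) (a22 : 'M[R]_n) :
  - blk3 a11 a12 a13 a21 a22 a23 a31 a32 a33 =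
  blk3 (- a11) (- a12) (- a13) (- a21) (- a22) (- a23) (- a31) (- a32) (- a33).
Proof. by rewrite /blk3 !opp_block_mx opp_col_mx opp_row_mx. Qed.

Lemma mul_blk3 n (a11 a13 a31 a33 b11 b13 b31 b33 : 'M[R]_1) (a12 a32 b12 b32 : 'M[R]_(1,n))
  (a21 a23 b21 b23 : 'M[R]_(n,1)) (a22 b22 : 'M[R]_n) :
  blk3 a11 a12 a13 a21 a22 a23 a31 a32 a33 *m blk3 b11 b12 b13 b21 b22 b23 b31 b32 b33 =
  blk3 (a11 *m b11 + a12 *m b21 + a13 *m b31) (a11 *m b12 + a12 *m b22 + a13 *m b32)
       (a11 *m b13 + a12 *m b23 + a13 *m b33)
       (a21 *m b11 + a22 *m b21 + a23 *m b31) (a21 *m b12 + a22 *m b22 + a23 *m b32)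
       (a21 *m b13 + a22 *m b23 + a23 *m b33)
       (a31 *m b11 + a32 *m b21 + a33 *m b31) (a31 *m b12 + a32 *m b22 + a33 *m b32)
       (a31 *m b13 + a32 *m b23 + a33 *m b33).
Proof.
rewrite /blk3 mulmx_block mulmx_block mul_block_col mul_row_block mul_row_col
  mul_col_row mul_col_mx mul_mx_row add_block_mx add_col_mx add_row_mx.
by [].
Qed.

Lemma blk3_eq n (a11 a13 a31 a33 b11 b13 b31 b33 : 'M[R]_1) (a12 a32 b12 b32 : 'M[R]_(1,n))
  (a21 a23 b21 b23 : 'M[R]_(n,1)) (a22 b22 : 'M[R]_n) :
  a11 = b11 -> a12 = b12 -> a13 = b13 -> a21 = b21 -> a22 = b22 -> a23 = b23 ->
  a31 = b31 -> a32 = b32 -> a33 = b33 ->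
  blk3 a11 a12 a13 a21 a22 a23 a31 a32 a33 = blk3 b11 b12 b13 b21 b22 b23 b31 b32 b33.
Proof. by move=> -> -> -> -> -> -> -> -> ->. Qed.

Lemma trdot n (x y : 'cV[R]_n) : x^T *m y = (dotv x y)%:M.
Proof.
apply/matrixP => i j; rewrite (ord1 i) (ord1 j) !mxE eqxx mulr1n /dotv.
by apply: eq_bigr => k _; rewrite mxE.
Qed.

Lemma outdot n (x y w : 'cV[R]_n) : x *m y^T *m w = dotv y w *: x.
Proof. by rewrite -mulmxA trdot mul_mx_scalar. Qed.

Lemma dotvC n (x y : 'cV[R]_n) : dotv x y = dotv y x.
Proof. by rewrite /dotv; apply: eq_bigr => k _; rewrite mulrC. Qed.

End MxDer.

Lemma rder_aff (R : realType) (z a : R) : is_derive z 1 (fun t => a + t) 1.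
Proof. have := rder_add (rder_cst z a) (rder_id z). by rewrite add0r. Qed.
Lemma rder_aff2 (R : realType) (z a b : R) : is_derive z 1 (fun t => a + t * b) b.
Proof. have := rder_add (rder_cst z a) (rder_mul (rder_id z) (rder_cst z b)).
by rewrite add0r mul1r mulr0 addr0. Qed.

Ltac rderT := repeat first [ eapply rder_aff | eapply rder_aff2 | eapply rder_cst | eapply rder_id | eapply rder_add | eapply rder_mul | eapply rder_opp ].

Ltac mxd := repeat first [ eapply mxder_cst | eapply mxder_add | eapply mxder_opp
  | eapply mxder_scale | eapply mxder_scalef; [rderT|]
  | eapply mxder_calB1 | eapply mxder_calB2 | eassumption ].


Ltac mxsimp := repeat progress rewrite ?mulmxDl ?mulmxDr ?mulNmx ?mulmxN ?mul0mx ?mulmx0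
  -?scalemxAl -?scalemxAr ?mul1mx ?mulmx1 ?scaler0 ?add0r ?addr0 ?oppr0 ?mulmxA
  ?trdot ?outdot ?mul_scalar_mx ?mul_mx_scalar.

Ltac mxfin := apply/matrixP; let i := fresh "i" in let j := fresh "j" in intros i j;
  try rewrite (ord1 i); try rewrite (ord1 j); rewrite !mxE ?eqxx ?mulr1n.

Lemma calB0E (R : realType) n : calB0 R n = blk3 (- 1%:M) 0 0 0 0 0 0 0 1%:M.
Proof. by []. Qed.

Lemma trAx (R : realType) n (A : 'M[R]_n) (x : 'cV[R]_n) : A^T = - A -> (A *m x)^T = - (x^T *m A).
Proof. by move=> hA; rewrite trmx_mul hA mulmxN. Qed.

Lemma solve_eq (R : realType) n (X Y : 'cV[R]_n) : X + Y = 0 -> X = - Y.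
Proof. by move=> h; rewrite -[X]addr0 -(subrr Y) addrA h add0r. Qed.

Lemma dotv0r (R : realType) n (x : 'cV[R]_n) : dotv x 0 = 0.
Proof. by rewrite /dotv big1 // => k _; rewrite mxE mulr0. Qed.
Lemma dotv0l (R : realType) n (x : 'cV[R]_n) : dotv 0 x = 0.
Proof. by rewrite /dotv big1 // => k _; rewrite mxE mul0r. Qed.
Lemma dotvNr (R : realType) n (x y : 'cV[R]_n) : dotv x (- y) = - dotv x y.
Proof. by rewrite /dotv -sumrN; apply: eq_bigr => k _; rewrite mxE mulrN. Qed.
Lemma dotvNl (R : realType) n (x y : 'cV[R]_n) : dotv (- x) y = - dotv x y.
Proof. by rewrite /dotv -sumrN; apply: eq_bigr => k _; rewrite mxE mulNr. Qed.

Lemma alg_a (R : realType) n (A : 'M[R]_n) (U V DU DV DDU DDV : 'cV[R]_n) (z zeta : R) :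
  A^T = - A ->
  DDU + (2 * dotv U V) *: U - dotv U U *: V + (z / 2) *: U + A *m U = 0 ->
  DDV + (2 * dotv U V) *: V - dotv V V *: U + (z / 2) *: V - A *m V = 0 ->
  1 *: calB0 R n + (2 * zeta ^+ 2 + z) *: 0 +
  (2 * zeta) *: calB1 DU DV +
  2 *: blk3 (- (dotv DU V + dotv U DV)%:M) DDV^T 0 DDU
    (DU *m V^T + U *m DV^T - (DV *m U^T + V *m DU^T) + 0) DDV 0 DDU^T
    (dotv DU V + dotv U DV)%:M =
  1 *: calB0 R n + zeta *: 0 + 0 +
  commmx (zeta *: calB0 R n + calB1 U V)
    ((2 * zeta ^+ 2 + z) *: calB0 R n + (2 * zeta) *: calB1 U V + 2 *: calB2 A U V DU DV).
Proof.
move=> hA H1 H2.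
have EU : DDU = - ((2 * dotv U V) *: U - dotv U U *: V + (z / 2) *: U + A *m U).
  apply/matrixP => i j; move/matrixP: H1 => /(_ i j); rewrite !mxE => h.
  by rewrite -[LHS]subr0 -[X in _ - X = _]h; ring.
have EV : DDV = - ((2 * dotv U V) *: V - dotv V V *: U + (z / 2) *: V - A *m V).
  apply/matrixP => i j; move/matrixP: H2 => /(_ i j); rewrite !mxE => h.
  by rewrite -[LHS]subr0 -[X in _ - X = _]h; ring.
rewrite EU EV ?raddfN ?raddfD ?raddfN ?raddfB /= ?linearZ /= (@trAx _ _ _ U hA) (@trAx _ _ _ V hA).
rewrite calB0E /calB1 /calB2 /commmx ?scaler0 ?addr0.
rewrite !scale_blk3 !add_blk3 !mul_blk3 !opp_blk3 !add_blk3.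
apply: blk3_eq; mxsimp.
all: rewrite ?dotv0r ?dotv0l ?dotvNr ?dotvNl ?(dotvC V U) ?(dotvC V DU) ?(dotvC DV U) ?(dotvC DU U) ?(dotvC DV V).
all: mxfin; field; done.
Qed.

Lemma alg_b (R : realType) n (A : 'M[R]_n) (U V DU DV DDU DDV : 'cV[R]_n) (z zeta : R) :
  A^T = - A -> zeta != 0 ->
  DDU + (2 * dotv U V) *: U - dotv U U *: V + 2^-1 *: (1 *: U + z *: DU) + A *m U = 0 ->
  DDV + (2 * dotv U V) *: V - dotv V V *: U - 2^-1 *: (1 *: V + z *: DV) - A *m V = 0 ->
  zeta^-1 *: (zeta *: calB0 R n + calB1 U V) +
  (2 + z / zeta) *: (0 + calB1 DU DV) +
  (2 / zeta) *: blk3 (- (dotv DU V + dotv U DV)%:M) DDV^T 0 DDU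
    (DU *m V^T + U *m DV^T - (DV *m U^T + V *m DU^T) + 0) DDV 0 DDU^T
    (dotv DU V + dotv U DV)%:M =
  1 *: calB0 R n + zeta *: 0 + 0 +
  commmx (zeta *: calB0 R n + calB1 U V)
    ((2 + z / zeta) *: (zeta *: calB0 R n + calB1 U V) + (2 / zeta) *: calB2 A U V DU DV).
Proof.
move=> hA hz H1 H2.
have EU : DDU = - ((2 * dotv U V) *: U - dotv U U *: V + 2^-1 *: (1 *: U + z *: DU) + A *m U).
  apply/matrixP => i j; move/matrixP: H1 => /(_ i j); rewrite !mxE => h.
  by rewrite -[LHS]subr0 -[X in _ - X = _]h; ring.
have EV : DDV = - ((2 * dotv U V) *: V - dotv V V *: U - 2^-1 *: (1 *: V + z *: DV) - A *m V).
  apply/matrixP => i j; move/matrixP: H2 => /(_ i j); rewrite !mxE => h.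
  by rewrite -[LHS]subr0 -[X in _ - X = _]h; ring.
rewrite EU EV ?raddfN ?raddfD ?raddfN ?raddfB /= ?linearZ /= (@trAx _ _ _ U hA) (@trAx _ _ _ V hA).
rewrite calB0E /calB1 /calB2 /commmx ?scaler0 ?addr0 ?add0r.
rewrite !scale_blk3 !add_blk3 !mul_blk3 !opp_blk3 !add_blk3.
apply: blk3_eq; mxsimp.
all: rewrite ?dotv0r ?dotv0l ?dotvNr ?dotvNl ?(dotvC V U) ?(dotvC V DU) ?(dotvC DV U) ?(dotvC DU U) ?(dotvC DV V).
all: mxfin; field; rewrite ?hz //.
Qed.

Theorem mainTheorem10 (R : realType) (n : nat) (A : 'M[R]_n)
  (u v : R -> 'cV[R]_n) :
  (1 <= n)%N ->
  A^T = - A ->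
  (forall z, derivable u z 1) -> (forall z, derivable v z 1) ->
  (forall z, derivable (derive1 u) z 1) -> (forall z, derivable (derive1 v) z 1) ->
  (* (a) *)
  ((forall z,
      derive1 (derive1 u) z + (2 * dotv (u z) (v z)) *: u z - dotv (u z) (u z) *: v z
        + (z / 2) *: u z + A *m u z = 0 /\
      derive1 (derive1 v) z + (2 * dotv (u z) (v z)) *: v z - dotv (v z) (v z) *: u z
        + (z / 2) *: v z - A *m v z = 0) ->
   let calB := fun z zeta => zeta *: calB0 R n + calB1 (u z) (v z) in
   let calA := fun z zeta =>
     (2 * zeta ^+ 2 + z) *: calB0 R n + (2 * zeta) *: calB1 (u z) (v z)
       + 2 *: calB2 A (u z) (v z) (derive1 u z) (derive1 v z) in
   forall z zeta,
     derive1 (fun t => calA t zeta) z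
       = derive1 (fun s => calB z s) zeta + commmx (calB z zeta) (calA z zeta))
  /\
  (* (b) *)
  ((forall z,
      derive1 (derive1 u) z + (2 * dotv (u z) (v z)) *: u z - dotv (u z) (u z) *: v z
        + 2^-1 *: derive1 (fun t => t *: u t) z + A *m u z = 0 /\
      derive1 (derive1 v) z + (2 * dotv (u z) (v z)) *: v z - dotv (v z) (v z) *: u z
        - 2^-1 *: derive1 (fun t => t *: v t) z - A *m v z = 0) ->
   let calB := fun z zeta => zeta *: calB0 R n + calB1 (u z) (v z) in
   let calA := fun z zeta =>
     (2 + z / zeta) *: (zeta *: calB0 R n + calB1 (u z) (v z))
       + (2 / zeta) *: calB2 A (u z) (v z) (derive1 u z) (derive1 v z) in
   forall z zeta, zeta != 0 ->
     derive1 (fun t => calA t zeta) z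
       = derive1 (fun s => calB z s) zeta + commmx (calB z zeta) (calA z zeta)).
Proof.
move=> _ hA hu hv hdu hdv; split.
- move=> HODE; cbv zeta => z zeta.
  have Hu := mxder_of (hu z). have Hv := mxder_of (hv z).
  have Hdu := mxder_of (hdu z). have Hdv := mxder_of (hdv z).
  have [H1 H2] := HODE z.
  etransitivity. { apply mxder_derive1. mxd. }
  symmetry. etransitivity. { apply: f_equal2; last reflexivity. apply mxder_derive1. mxd. }
  symmetry.
  exact: (@alg_a _ _ _ _ _ _ _ _ _ _ _ hA H1 H2).
- move=> HODE; cbv zeta => z zeta hz.
  have Hu := mxder_of (hu z). have Hv := mxder_of (hv z).
  have Hdu := mxder_of (hdu z). have Hdv := mxder_of (hdv z).
  have [H1 H2] := HODE z.
  rewrite (mxder_derive1 (mxder_scalef (rder_id z) Hu)) in H1.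
  rewrite (mxder_derive1 (mxder_scalef (rder_id z) Hv)) in H2.
  etransitivity. { apply mxder_derive1. mxd. }
  symmetry. etransitivity. { apply: f_equal2; last reflexivity. apply mxder_derive1. mxd. }
  symmetry.
  exact: (@alg_b _ _ _ _ _ _ _ _ _ _ _ hA hz H1 H2).
Qed.
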